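(* Let $\underline{\theta} < 0 < \overline{\theta}$ and $\underline{\delta B} < 0 < \overline{\delta B}$ be real numbers. Work in $\mathbb{R}^5$ with coordinates $(\psi, z^{+}, z^{-}, \theta, \delta p)$ and define the three polytopes $$\mathcal{P}_{0,0,0} = \{(\psi,z^+,z^-)=(0,0,0),\ \delta p = 0,\ \underline{\theta} \le \theta \le \overline{\theta}\},$$ $$\mathcal{P}_{1,1,0} = \{(\psi,z^+,z^-)=(1,1,0),\ \underline{\delta B}\,\theta \le \delta p \le \overline{\delta B}\,\theta,\ 0 \le \theta \le \overline{\theta}\},$$ $$\mathcal{P}_{1,0,1} = \{(\psi,z^+,z^-)=(1,0,1),\ \overline{\delta B}\,\theta \le \delta p \le \underline{\delta B}\,\theta,\ \underline{\theta} \le \theta \le 0\},$$ and let $\mathcal{P} = \operatorname{conv}(\mathcal{P}_{0,0,0} \cup \mathcal{P}_{1,1,0} \cup \mathcal{P}_{1,0,1})$. Then each of the following inequalities is facet-defining for $\mathcal{P}$ (i.e. valid for $\mathcal{P}$, and the face of $\mathcal{P}$ on which it holds with equality has dimension $\dim \mathcal{P} - 1$): 1. $\underline{\theta} z^{+} + \theta \ge \underline{\theta}$; 2. $\overline{\theta} z^{-} + \theta \le \overline{\theta}$; 3. $-\overline{\theta}\,\underline{\delta B}\, z^{+} - \underline{\theta}\,\overline{\delta B}\, z^{-} + \delta p \ge 0$; 4. $-\overline{\theta}\,\overline{\delta B}\, z^{+} - \underline{\theta}\,\underline{\delta B}\, z^{-} + \delta p \le 0$; 5. $\overline{\theta}\,\underline{\delta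 B}\, z^{+} + \overline{\theta}\,\overline{\delta B}\, z^{-} + \overline{\delta B}\,\theta - \delta p \le \overline{\theta}\,\overline{\delta B}$; 6. $\overline{\theta}\,\overline{\delta B}\, z^{+} + \overline{\theta}\,\underline{\delta B}\, z^{-} + \underline{\delta B}\,\theta - \delta p \ge \overline{\theta}\,\underline{\delta B}$; 7. $\underline{\theta}\,\overline{\delta B}\, z^{+} + \underline{\theta}\,\underline{\delta B}\, z^{-} + \overline{\delta B}\,\theta - \delta p \ge \underline{\theta}\,\overline{\delta B}$; 8. $\underline{\theta}\,\underline{\delta B}\, z^{+} + \underline{\theta}\,\overline{\delta B}\, z^{-} + \underline{\delta B}\,\theta - \delta p \le \underline{\theta}\,\underline{\delta B}$.
   Context: This models a single transmission branch with a FACTS device: $\psi$ indicates installation of the device, $z^+$ (resp. $z^-$) indicates that the device is installed and the phase angle difference $\theta$ is nonnegative (resp. nonpositive), $\delta p$ is the change in power flow induced by the device, $[\underline{\theta},\overline{\theta}]$ are the bounds on the angle difference and $[\underline{\delta B},\overline{\delta B}]$ the bounds on the susceptance change. The polytope $\mathcal{P}$ satisfies the equation $\psi = z^+ + z^-$. *)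

(* Defs.v *)
From mathcomp Require Import all_boot all_order all_algebra.
Set Implicit Arguments. Unset Strict Implicit. Unset Printing Implicit Defensive.
Import Order.TTheory GRing.Theory Num.Theory.
Local Open Scope ring_scope.

Section Defs.
Variable R : realFieldType.

Definition vpsi (x : 'rV[R]_5) : R := x ord0 (inord 0).
Definition vzp  (x : 'rV[R]_5) : R := x ord0 (inord 1).
Definition vzm  (x : 'rV[R]_5) : R := x ord0 (inord 2).
Definition vth  (x : 'rV[R]_5) : R := x ord0 (inord 3).
Definition vdp  (x : 'rV[R]_5) : R := x ord0 (inord 4).

Definition conv (S : 'rV[R]_5 -> Prop) : 'rV[R]_5 -> Prop :=
  fun x => exists (n : nat) (w : 'I_n -> R) (p : 'I_n -> 'rV[R]_5),
    (forall i, 0 <= w i) /\ \sum_(i < n) w i = 1 /\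
    (forall i, S (p i)) /\ x = \sum_(i < n) w i *: p i.

Definition aff_indep_in (S : 'rV[R]_5 -> Prop) (m : nat) : Prop :=
  exists p : 'I_m.+1 -> 'rV[R]_5,
    (forall i, S (p i)) /\
    row_free (\matrix_(i < m) (p (lift ord0 i) - p ord0)).

Definition affdim (S : 'rV[R]_5 -> Prop) (d : nat) : Prop :=
  aff_indep_in S d /\ (forall m, aff_indep_in S m -> (m <= d)%N).

Definition facet_le (P : 'rV[R]_5 -> Prop) (g : 'rV[R]_5 -> R) (b : R) : Prop :=
  (forall x, P x -> g x <= b) /\
  exists d : nat, affdim P d.+1 /\ affdim (fun x => P x /\ g x = b) d.

Definition facet_ge (P : 'rV[R]_5 -> Prop) (g : 'rV[R]_5 -> R) (b : R) : Prop :=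
  (forall x, P x -> b <= g x) /\
  exists d : nat, affdim P d.+1 /\ affdim (fun x => P x /\ g x = b) d.

Definition P000 (thl thu : R) (x : 'rV[R]_5) : Prop :=
  vpsi x = 0 /\ vzp x = 0 /\ vzm x = 0 /\ vdp x = 0 /\ thl <= vth x <= thu.
Definition P110 (thu dBl dBu : R) (x : 'rV[R]_5) : Prop :=
  vpsi x = 1 /\ vzp x = 1 /\ vzm x = 0 /\
  dBl * vth x <= vdp x <= dBu * vth x /\ 0 <= vth x <= thu.
Definition P101 (thl dBl dBu : R) (x : 'rV[R]_5) : Prop :=
  vpsi x = 1 /\ vzp x = 0 /\ vzm x = 1 /\
  dBu * vth x <= vdp x <= dBl * vth x /\ thl <= vth x <= 0.

Definition Pfacts (thl thu dBl dBu : R) : 'rV[R]_5 -> Prop :=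
  conv (fun x => P000 thl thu x \/ P110 thu dBl dBu x \/ P101 thl dBl dBu x).
End Defs.

(* Main.v *)
Require Import Defs.
From mathcomp Require Import all_boot all_order all_algebra.
From mathcomp Require Import ring lra.
Import Order.TTheory GRing.Theory Num.Theory.
Local Open Scope ring_scope.

Section Helpers.
Variable R : realFieldType.

Definition vec5 (a b c d e : R) : 'rV[R]_5 := \row_(j < 5) nth 0 [:: a; b; c; d; e] j.

Lemma vpsi5 a b c d e : vpsi (vec5 a b c d e) = a.
Proof. by rewrite /vpsi mxE inordK. Qed.
Lemma vzp5 a b c d e : vzp (vec5 a b c d e) = b.
Proof. by rewrite /vzp mxE inordK. Qed.
Lemma vzm5 a b c d e : vzm (vec5 a b c d e) = c.
Proof. by rewrite /vzm mxE inordK. Qed.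
Lemma vth5 a b c d e : vth (vec5 a b c d e) = d.
Proof. by rewrite /vth mxE inordK. Qed.
Lemma vdp5 a b c d e : vdp (vec5 a b c d e) = e.
Proof. by rewrite /vdp mxE inordK. Qed.

Lemma vec5_eta (v : 'rV[R]_5) : v = vec5 (vpsi v) (vzp v) (vzm v) (vth v) (vdp v).
Proof.
apply/rowP => j; rewrite mxE /vpsi /vzp /vzm /vth /vdp.
have E : forall k (H : (k < 5)%N), v 0 (Ordinal H) = v ord0 (inord k).
  by move=> k H; congr (v _ _); apply: val_inj; rewrite /= inordK.
by case: j => [[|[|[|[|[|//]]]]] Hj]; rewrite E.
Qed.

Lemma vec5_add a b c d e a' b' c' d' e' :
  vec5 a b c d e + vec5 a' b' c' d' e' = vec5 (a + a') (b + b') (c + c') (d + d') (e + e').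
Proof. by apply/rowP => j; rewrite !mxE; case: j => [[|[|[|[|[|//]]]]] Hj]. Qed.
Lemma vec5_opp a b c d e : - vec5 a b c d e = vec5 (- a) (- b) (- c) (- d) (- e).
Proof. by apply/rowP => j; rewrite !mxE; case: j => [[|[|[|[|[|//]]]]] Hj]. Qed.
Lemma vec5_scale k a b c d e : k *: vec5 a b c d e = vec5 (k * a) (k * b) (k * c) (k * d) (k * e).
Proof. by apply/rowP => j; rewrite !mxE; case: j => [[|[|[|[|[|//]]]]] Hj]. Qed.
Lemma vec5_0 : 0 = vec5 0 0 0 0 0.
Proof. by apply/rowP => j; rewrite !mxE; case: j => [[|[|[|[|[|//]]]]] Hj]. Qed.
Lemma vec5_inj a b c d e a' b' c' d' e' :
  vec5 a b c d e = vec5 a' b' c' d' e' -> [/\ a = a', b = b', c = c', d = d' & e = e'].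
Proof.
move=> H; split.
- by have := congr1 (@vpsi R) H; rewrite !vpsi5.
- by have := congr1 (@vzp R) H; rewrite !vzp5.
- by have := congr1 (@vzm R) H; rewrite !vzm5.
- by have := congr1 (@vth R) H; rewrite !vth5.
- by have := congr1 (@vdp R) H; rewrite !vdp5.
Qed.

Definition glin (a0 a b c d : R) (x : 'rV[R]_5) :=
  a0 * vpsi x + a * vzp x + b * vzm x + c * vth x + d * vdp x.

Lemma glinB a0 a b c d x y : glin a0 a b c d (x - y) = glin a0 a b c d x - glin a0 a b c d y.
Proof. rewrite /glin /vpsi /vzp /vzm /vth /vdp !mxE; ring. Qed.

Lemma glin_sum n (w : 'I_n -> R) p a0 a b c d :
  glin a0 a b c d (\sum_(i < n) w i *: p i) = \sum_(i < n) w i * glin a0 a b c d (p i).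
Proof.
have co : forall j, (\sum_(i < n) w i *: p i) ord0 j = \sum_(i < n) w i * p i ord0 j.
  by move=> j; rewrite summxE; apply: eq_bigr => i _; rewrite mxE.
rewrite /glin /vpsi /vzp /vzm /vth /vdp !co !mulr_sumr -!big_split /=.
by apply: eq_bigr => i _; ring.
Qed.

Lemma conv_le (S : 'rV[R]_5 -> Prop) a0 a b c d e x :
  (forall y, S y -> glin a0 a b c d y <= e) -> conv S x -> glin a0 a b c d x <= e.
Proof.
move=> H [n [w [p [w0 [w1 [Sp ->]]]]]]; rewrite glin_sum -[e]mul1r -w1 mulr_suml.
by apply: ler_sum => i _; rewrite ler_wpM2l // H.
Qed.
Lemma conv_ge (S : 'rV[R]_5 -> Prop) a0 a b c d e x :
  (forall y, S y -> e <= glin a0 a b c d y) -> conv S x -> e <= glin a0 a b c d x.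
Proof.
move=> H [n [w [p [w0 [w1 [Sp ->]]]]]]; rewrite glin_sum -[e]mul1r -w1 mulr_suml.
by apply: ler_sum => i _; rewrite ler_wpM2l // H.
Qed.

Lemma conv1 (S : 'rV[R]_5 -> Prop) x : S x -> conv S x.
Proof.
move=> Sx; exists 1%N, (fun _ => 1), (fun _ => x).
split; first by move=> _; exact: ler01.
by rewrite !big_ord1 scale1r.
Qed.

Lemma rowfree_ker m (M : 'M[R]_(m, 5)) :
  (forall u : 'rV_m, u *m M = 0 -> u = 0) -> row_free M.
Proof.
move=> H; rewrite -kermx_eq0; apply/eqP/row_matrixP => i; rewrite row0.
by apply: H; rewrite -row_mul mulmx_ker row0.
Qed.

Lemma rank_span m k (M : 'M[R]_(m, 5)) (U : 'M[R]_(k, 5)) :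
  (forall i, exists c : 'rV_k, row i M = c *m U) -> (\rank M <= k)%N.
Proof.
move=> H; apply: leq_trans (rank_leq_row U); apply: mxrankS.
by apply/row_subP => i; case: (H i) => c ->; exact: submxMl.
Qed.

Lemma aff_le m k (S : 'rV[R]_5 -> Prop) (U : 'M[R]_(k, 5)) :
  (forall x y, S x -> S y -> exists c : 'rV_k, x - y = c *m U) ->
  aff_indep_in S m -> (m <= k)%N.
Proof.
move=> H [p [Sp]]; rewrite /row_free => /eqP <-.
apply: rank_span => i; rewrite rowK; exact: H.
Qed.

Lemma combo3 (a b c : R) (u1 u2 u3 : 'rV[R]_5) :
  a *: u1 + b *: u2 + c *: u3 =
  (row_mx a%:M (row_mx b%:M c%:M) : 'rV_(1 + (1 + 1))) *m col_mx u1 (col_mx u2 u3).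
Proof. by rewrite !mul_row_col !mul_scalar_mx addrA. Qed.
Lemma combo4 (a b c d : R) (u1 u2 u3 u4 : 'rV[R]_5) :
  a *: u1 + b *: u2 + c *: u3 + d *: u4 =
  (row_mx a%:M (row_mx b%:M (row_mx c%:M d%:M)) : 'rV_(1 + (1 + (1 + 1)))) *m
     col_mx u1 (col_mx u2 (col_mx u3 u4)).
Proof. by rewrite !mul_row_col !mul_scalar_mx !addrA. Qed.

Lemma aff3 (S : 'rV[R]_5 -> Prop) (P0 P1 P2 P3 : 'rV[R]_5) :
  S P0 -> S P1 -> S P2 -> S P3 ->
  (forall a b c, a *: (P1 - P0) + b *: (P2 - P0) + c *: (P3 - P0) = 0 ->
     [/\ a = 0, b = 0 & c = 0]) -> aff_indep_in S 3.
Proof.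
move=> S0 S1 S2 S3 H; exists (fun i : 'I_4 => nth 0 [:: P0; P1; P2; P3] i); split.
  by case => [[|[|[|[|//]]]] ?].
apply: rowfree_ker => u; rewrite mulmx_sum_row !big_ord_recl big_ord0 !rowK /= addr0 addrA.
move/H => [h0 h1 h2]; apply/rowP => i; rewrite mxE.
by case: i => [[|[|[|//]]] Hi]; [rewrite -h0|rewrite -h1|rewrite -h2]; congr (u _ _); apply: val_inj.
Qed.

Lemma aff4 (S : 'rV[R]_5 -> Prop) (P0 P1 P2 P3 P4 : 'rV[R]_5) :
  S P0 -> S P1 -> S P2 -> S P3 -> S P4 ->
  (forall a b c d, a *: (P1 - P0) + b *: (P2 - P0) + c *: (P3 - P0) + d *: (P4 - P0) = 0 ->
     [/\ a = 0, b = 0, c = 0 & d = 0]) -> aff_indep_in S 4.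
Proof.
move=> S0 S1 S2 S3 S4 H; exists (fun i : 'I_5 => nth 0 [:: P0; P1; P2; P3; P4] i); split.
  by case => [[|[|[|[|[|//]]]]] ?].
apply: rowfree_ker => u; rewrite mulmx_sum_row !big_ord_recl big_ord0 !rowK /= addr0 !addrA.
move/H => [h0 h1 h2 h3]; apply/rowP => i; rewrite mxE.
by case: i => [[|[|[|[|//]]]] Hi]; [rewrite -h0|rewrite -h1|rewrite -h2|rewrite -h3];
  congr (u _ _); apply: val_inj.
Qed.


Lemma face_dp (S : 'rV[R]_5 -> Prop) a0 a b c d e : d != 0 ->
  (forall x, S x -> vpsi x = vzp x + vzm x /\ glin a0 a b c d x = e) ->
  forall m, aff_indep_in S m -> (m <= 3)%N.
Proof.
move=> dnz H m; apply: (@aff_le m _ S (col_mx (vec5 1 1 0 0 (- (a0 + a) / d))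
   (col_mx (vec5 1 0 1 0 (- (a0 + b) / d)) (vec5 0 0 0 1 (- c / d))))).
move=> x y Sx Sy; case: (H _ Sx) => hx gx; case: (H _ Sy) => hy gy.
set v := x - y.
have hv : vpsi v = vzp v + vzm v.
  by move: hx hy; rewrite /v /vpsi /vzp /vzm !mxE => -> ->; ring.
have gv : glin a0 a b c d v = 0 by rewrite /v glinB gx gy subrr.
move: gv; rewrite /glin hv => gv.
have gd : vdp v = - ((a0 + a) * vzp v + (a0 + b) * vzm v + c * vth v) / d.
  apply: (mulfI dnz); rewrite mulrCA divff // mulr1; lra.
exists (row_mx (vzp v)%:M (row_mx (vzm v)%:M (vth v)%:M)).
rewrite -combo3 {1}(vec5_eta v) !vec5_scale !vec5_add hv gd; by congr vec5; ring.
Qed.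

Lemma face_th (S : 'rV[R]_5 -> Prop) a0 a b c e : c != 0 ->
  (forall x, S x -> vpsi x = vzp x + vzm x /\ glin a0 a b c 0 x = e) ->
  forall m, aff_indep_in S m -> (m <= 3)%N.
Proof.
move=> dnz H m; apply: (@aff_le m _ S (col_mx (vec5 1 1 0 (- (a0 + a) / c) 0)
   (col_mx (vec5 1 0 1 (- (a0 + b) / c) 0) (vec5 0 0 0 0 1)))).
move=> x y Sx Sy; case: (H _ Sx) => hx gx; case: (H _ Sy) => hy gy.
set v := x - y.
have hv : vpsi v = vzp v + vzm v.
  by move: hx hy; rewrite /v /vpsi /vzp /vzm !mxE => -> ->; ring.
have gv : glin a0 a b c 0 v = 0 by rewrite /v glinB gx gy subrr.
move: gv; rewrite /glin hv => gv.
have gd : vth v = - ((a0 + a) * vzp v + (a0 + b) * vzm v) / c.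
  apply: (mulfI dnz); rewrite mulrCA divff // mulr1; lra.
exists (row_mx (vzp v)%:M (row_mx (vzm v)%:M (vdp v)%:M)).
rewrite -combo3 {1}(vec5_eta v) !vec5_scale !vec5_add hv gd; by congr vec5; ring.
Qed.

Lemma prod0p (x k : R) : 0 < k -> x * k = 0 -> x = 0.
Proof. by move=> /lt0r_neq0 hk /eqP; rewrite mulf_eq0 (negbTE hk) orbF => /eqP. Qed.
End Helpers.
Arguments vec5 {R}. Arguments glin {R}.

Ltac coords := rewrite ?vpsi5 ?vzp5 ?vzm5 ?vth5 ?vdp5.
Ltac solveP := rewrite /P000 /P110 /P101; coords; (repeat split);
  (try (apply/andP; split)); first [done | nra].
Ltac memU := first [ left; solveP | right; left; solveP | right; right; solveP ].


Section Main.
Variables (R : realFieldType) (thl thu dBl dBu : R).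
Hypotheses (hthl : thl < 0) (hthu : 0 < thu) (hdBl : dBl < 0) (hdBu : 0 < dBu).
Let U := fun x => P000 thl thu x \/ P110 thu dBl dBu x \/ P101 thl dBl dBu x.
Let P := Pfacts thl thu dBl dBu.

Lemma P_hyp x : P x -> vpsi x = vzp x + vzm x.
Proof.
move=> Px.
have h1 := @conv_le R U 1 (-1) (-1) 0 0 0 x.
have h2 := @conv_ge R U 1 (-1) (-1) 0 0 0 x.
have : glin 1 (-1) (-1) 0 0 x = 0.
  have hU : forall y, U y -> glin 1 (-1) (-1) 0 0 y = 0.
    move=> y Uy; rewrite /glin.
    by case: Uy => [[-> [-> [-> _]]]|[[-> [-> [-> _]]]|[-> [-> [-> _]]]]]; lra.
  apply/eqP; rewrite eq_le; apply/andP; split; [apply: h1|apply: h2] => // y Uy; by rewrite hU.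
rewrite /glin; lra.
Qed.

Ltac hyps := have h1 := hthl; have h2 := hthu; have h3 := hdBl; have h4 := hdBu.
Local Notation O5 := (vec5 0 0 0 0 0 : 'rV[R]_5).
Local Notation A0 := (vec5 0 0 0 thl 0 : 'rV[R]_5).
Local Notation A1 := (vec5 0 0 0 thu 0 : 'rV[R]_5).
Local Notation B0 := (vec5 1 1 0 0 0 : 'rV[R]_5).
Local Notation B1 := (vec5 1 1 0 thu (dBl * thu) : 'rV[R]_5).
Local Notation B2 := (vec5 1 1 0 thu (dBu * thu) : 'rV[R]_5).
Local Notation C0 := (vec5 1 0 1 0 0 : 'rV[R]_5).
Local Notation C1 := (vec5 1 0 1 thl (dBu * thl) : 'rV[R]_5).
Local Notation C2 := (vec5 1 0 1 thl (dBl * thl) : 'rV[R]_5).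

Lemma affP : affdim P 4.
Proof.
hyps.
split.
- apply: (@aff4 _ P O5 A1 B0 B2 C0); try (apply: conv1; memU).
  move=> a b c d.
  rewrite !vec5_opp !vec5_add !vec5_scale !vec5_add [X in _ = X -> _]vec5_0
  => /vec5_inj [e1 e2 e3 e4 e5].
  have hc : c = 0 by apply: (@prod0p R c (dBu * thu)); [nra|lra].
  subst c. have hd : d = 0 by lra. subst d. have hb : b = 0 by lra. subst b.
  have ha : a = 0 by apply: (@prod0p R a thu); [nra|lra].
  by [].
- move=> m; apply: (@aff_le _ m _ P (col_mx (vec5 1 1 0 0 0)
     (col_mx (vec5 1 0 1 0 0) (col_mx (vec5 0 0 0 1 0) (vec5 0 0 0 0 1))))).
  move=> x y Px Py; have hx := P_hyp _ Px; have hy := P_hyp _ Py.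
  set v := x - y.
  have hv : vpsi v = vzp v + vzm v.
    by move: hx hy; rewrite /v /vpsi /vzp /vzm !mxE => -> ->; ring.
  exists (row_mx (vzp v)%:M (row_mx (vzm v)%:M (row_mx (vth v)%:M (vdp v)%:M)))%R.
  by rewrite -combo4 {1}(vec5_eta _ v) !vec5_scale !vec5_add hv; congr vec5; ring.
Qed.

Lemma m1nz : (-1 : R) != 0.
Proof. by rewrite oppr_eq0 oner_eq0. Qed.

Lemma mk_le g a0 a b c d e : (forall x, g x = glin a0 a b c d x) ->
  (forall y, U y -> glin a0 a b c d y <= e) ->
  affdim (fun x => P x /\ g x = e) 3 -> facet_le P g e.
Proof.
move=> hg hU hd; split; last by exists 3%N; split; [exact: affP | exact: hd].
by move=> x Px; rewrite hg; exact: (@conv_le R U _ _ _ _ _ _ x hU Px).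
Qed.
Lemma mk_ge g a0 a b c d e : (forall x, g x = glin a0 a b c d x) ->
  (forall y, U y -> e <= glin a0 a b c d y) ->
  affdim (fun x => P x /\ g x = e) 3 -> facet_ge P g e.
Proof.
move=> hg hU hd; split; last by exists 3%N; split; [exact: affP | exact: hd].
by move=> x Px; rewrite hg; exact: (@conv_ge R U _ _ _ _ _ _ x hU Px).
Qed.

Lemma fac1 : facet_ge P (fun x => thl * vzp x + vth x) thl.
Proof.
hyps.
apply: (@mk_ge _ 0 thl 0 1 0).
- by move=> x; rewrite /glin; ring.
- move=> y Uy; rewrite /glin.
  case: Uy => [[-> [-> [-> [-> /andP[? ?]]]]]|[[-> [-> [-> [/andP[? ?] /andP[? ?]]]]]|[-> [-> [-> [/andP[? ?] /andP[? ?]]]]]]]; nra.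
split.
- apply: (@aff3 _ _ A0 B0 C1 C2); try (split; [apply: conv1; memU | coords; ring]).
  move=> a b c.
  rewrite !vec5_opp !vec5_add !vec5_scale !vec5_add [X in _ = X -> _]vec5_0
  => /vec5_inj [e1 e2 e3 e4 e5].
  have ha : a = 0 by lra. subst a.
  have hb : b = -c by lra. subst b.
  have hc : c = 0 by apply: (@prod0p R c (thl * (dBl - dBu))); [nra|lra]. subst c.
  by split; lra.
- have HH : forall x, (P x /\ thl * vzp x + vth x = thl) ->
    vpsi x = vzp x + vzm x /\ glin 0 thl 0 1 0 x = thl.
    by move=> x [Px gx]; split; [exact: P_hyp _ Px | rewrite /glin; lra].
  exact: (@face_th R (fun x => P x /\ thl * vzp x + vth x = thl) 0 thl 0 1 thl (oner_neq0 _) HH).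
Qed.

Lemma fac2 : facet_le P (fun x => thu * vzm x + vth x) thu.
Proof.
hyps.
apply: (@mk_le _ 0 0 thu 1 0).
- by move=> x; rewrite /glin; ring.
- move=> y Uy; rewrite /glin.
  case: Uy => [[-> [-> [-> [-> /andP[? ?]]]]]|[[-> [-> [-> [/andP[? ?] /andP[? ?]]]]]|[-> [-> [-> [/andP[? ?] /andP[? ?]]]]]]]; nra.
split.
- apply: (@aff3 _ _ A1 C0 B1 B2); try (split; [apply: conv1; memU | coords; ring]).
  move=> a b c.
  rewrite !vec5_opp !vec5_add !vec5_scale !vec5_add [X in _ = X -> _]vec5_0
  => /vec5_inj [e1 e2 e3 e4 e5].
  have ha : a = 0 by lra. subst a.
  have hb : b = -c by lra. subst b.
  have hc : c = 0 by apply: (@prod0p R c (thu * (dBu - dBl))); [nra|lra]. subst c.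
  by split; lra.
- have HH : forall x, (P x /\ thu * vzm x + vth x = thu) ->
    vpsi x = vzp x + vzm x /\ glin 0 0 thu 1 0 x = thu.
    by move=> x [Px gx]; split; [exact: P_hyp _ Px | rewrite /glin; lra].
  exact: (@face_th R (fun x => P x /\ thu * vzm x + vth x = thu) 0 0 thu 1 thu (oner_neq0 _) HH).
Qed.

Lemma fac3 : facet_ge P (fun x => - (thu * dBl) * vzp x - thl * dBu * vzm x + vdp x) 0.
Proof.
hyps.
apply: (@mk_ge _ 0 (- (thu * dBl)) (- (thl * dBu)) 0 1).
- by move=> x; rewrite /glin; ring.
- move=> y Uy; rewrite /glin.
  case: Uy => [[-> [-> [-> [-> /andP[? ?]]]]]|[[-> [-> [-> [/andP[? ?] /andP[? ?]]]]]|[-> [-> [-> [/andP[? ?] /andP[? ?]]]]]]]; nra.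
split.
- apply: (@aff3 _ _ O5 A1 B1 C1); try (split; [apply: conv1; memU | coords; ring]).
  move=> a b c.
  rewrite !vec5_opp !vec5_add !vec5_scale !vec5_add [X in _ = X -> _]vec5_0
  => /vec5_inj [e1 e2 e3 e4 e5].
  have hb : b = 0 by lra. subst b.
  have hc : c = 0 by lra. subst c.
  have ha : a = 0 by apply: (@prod0p R a (thu)); [nra|lra]. subst a.
  by split; lra.
- have HH : forall x, (P x /\ - (thu * dBl) * vzp x - thl * dBu * vzm x + vdp x = 0) ->
    vpsi x = vzp x + vzm x /\ glin 0 (- (thu * dBl)) (- (thl * dBu)) 0 1 x = 0.
    by move=> x [Px gx]; split; [exact: P_hyp _ Px | rewrite /glin; lra].
  exact: (@face_dp R (fun x => P x /\ - (thu * dBl) * vzp x - thl * dBu * vzm x + vdp x = 0) 0 (- (thu * dBl)) (- (thl * dBu)) 0 1 0 (oner_neq0 _) HH).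
Qed.

Lemma fac4 : facet_le P (fun x => - (thu * dBu) * vzp x - thl * dBl * vzm x + vdp x) 0.
Proof.
hyps.
apply: (@mk_le _ 0 (- (thu * dBu)) (- (thl * dBl)) 0 1).
- by move=> x; rewrite /glin; ring.
- move=> y Uy; rewrite /glin.
  case: Uy => [[-> [-> [-> [-> /andP[? ?]]]]]|[[-> [-> [-> [/andP[? ?] /andP[? ?]]]]]|[-> [-> [-> [/andP[? ?] /andP[? ?]]]]]]]; nra.
split.
- apply: (@aff3 _ _ O5 A1 B2 C2); try (split; [apply: conv1; memU | coords; ring]).
  move=> a b c.
  rewrite !vec5_opp !vec5_add !vec5_scale !vec5_add [X in _ = X -> _]vec5_0
  => /vec5_inj [e1 e2 e3 e4 e5].
  have hb : b = 0 by lra. subst b.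
  have hc : c = 0 by lra. subst c.
  have ha : a = 0 by apply: (@prod0p R a (thu)); [nra|lra]. subst a.
  by split; lra.
- have HH : forall x, (P x /\ - (thu * dBu) * vzp x - thl * dBl * vzm x + vdp x = 0) ->
    vpsi x = vzp x + vzm x /\ glin 0 (- (thu * dBu)) (- (thl * dBl)) 0 1 x = 0.
    by move=> x [Px gx]; split; [exact: P_hyp _ Px | rewrite /glin; lra].
  exact: (@face_dp R (fun x => P x /\ - (thu * dBu) * vzp x - thl * dBl * vzm x + vdp x = 0) 0 (- (thu * dBu)) (- (thl * dBl)) 0 1 0 (oner_neq0 _) HH).
Qed.

Lemma fac5 : facet_le P (fun x => thu * dBl * vzp x + thu * dBu * vzm x + dBu * vth x - vdp x) (thu * dBu).
Proof.
hyps.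
apply: (@mk_le _ 0 (thu * dBl) (thu * dBu) dBu (-1)).
- by move=> x; rewrite /glin; ring.
- move=> y Uy; rewrite /glin.
  case: Uy => [[-> [-> [-> [-> /andP[? ?]]]]]|[[-> [-> [-> [/andP[? ?] /andP[? ?]]]]]|[-> [-> [-> [/andP[? ?] /andP[? ?]]]]]]]; nra.
split.
- apply: (@aff3 _ _ A1 B1 C0 C1); try (split; [apply: conv1; memU | coords; ring]).
  move=> a b c.
  rewrite !vec5_opp !vec5_add !vec5_scale !vec5_add [X in _ = X -> _]vec5_0
  => /vec5_inj [e1 e2 e3 e4 e5].
  have ha : a = 0 by lra. subst a.
  have hb : b = -c by lra. subst b.
  have hc : c = 0 by apply: (@prod0p R c ((- thl))); [nra|lra]. subst c.
  by split; lra.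
- have HH : forall x, (P x /\ thu * dBl * vzp x + thu * dBu * vzm x + dBu * vth x - vdp x = (thu * dBu)) ->
    vpsi x = vzp x + vzm x /\ glin 0 (thu * dBl) (thu * dBu) dBu (-1) x = (thu * dBu).
    by move=> x [Px gx]; split; [exact: P_hyp _ Px | rewrite /glin; lra].
  exact: (@face_dp R (fun x => P x /\ thu * dBl * vzp x + thu * dBu * vzm x + dBu * vth x - vdp x = (thu * dBu)) 0 (thu * dBl) (thu * dBu) dBu (-1) (thu * dBu) m1nz HH).
Qed.

Lemma fac6 : facet_ge P (fun x => thu * dBu * vzp x + thu * dBl * vzm x + dBl * vth x - vdp x) (thu * dBl).
Proof.
hyps.
apply: (@mk_ge _ 0 (thu * dBu) (thu * dBl) dBl (-1)).
- by move=> x; rewrite /glin; ring.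
- move=> y Uy; rewrite /glin.
  case: Uy => [[-> [-> [-> [-> /andP[? ?]]]]]|[[-> [-> [-> [/andP[? ?] /andP[? ?]]]]]|[-> [-> [-> [/andP[? ?] /andP[? ?]]]]]]]; nra.
split.
- apply: (@aff3 _ _ A1 B2 C0 C2); try (split; [apply: conv1; memU | coords; ring]).
  move=> a b c.
  rewrite !vec5_opp !vec5_add !vec5_scale !vec5_add [X in _ = X -> _]vec5_0
  => /vec5_inj [e1 e2 e3 e4 e5].
  have ha : a = 0 by lra. subst a.
  have hb : b = -c by lra. subst b.
  have hc : c = 0 by apply: (@prod0p R c ((- thl))); [nra|lra]. subst c.
  by split; lra.
- have HH : forall x, (P x /\ thu * dBu * vzp x + thu * dBl * vzm x + dBl * vth x - vdp x = (thu * dBl)) ->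
    vpsi x = vzp x + vzm x /\ glin 0 (thu * dBu) (thu * dBl) dBl (-1) x = (thu * dBl).
    by move=> x [Px gx]; split; [exact: P_hyp _ Px | rewrite /glin; lra].
  exact: (@face_dp R (fun x => P x /\ thu * dBu * vzp x + thu * dBl * vzm x + dBl * vth x - vdp x = (thu * dBl)) 0 (thu * dBu) (thu * dBl) dBl (-1) (thu * dBl) m1nz HH).
Qed.

Lemma fac7 : facet_ge P (fun x => thl * dBu * vzp x + thl * dBl * vzm x + dBu * vth x - vdp x) (thl * dBu).
Proof.
hyps.
apply: (@mk_ge _ 0 (thl * dBu) (thl * dBl) dBu (-1)).
- by move=> x; rewrite /glin; ring.
- move=> y Uy; rewrite /glin.
  case: Uy => [[-> [-> [-> [-> /andP[? ?]]]]]|[[-> [-> [-> [/andP[? ?] /andP[? ?]]]]]|[-> [-> [-> [/andP[? ?] /andP[? ?]]]]]]]; nra.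
split.
- apply: (@aff3 _ _ A0 B0 B2 C2); try (split; [apply: conv1; memU | coords; ring]).
  move=> a b c.
  rewrite !vec5_opp !vec5_add !vec5_scale !vec5_add [X in _ = X -> _]vec5_0
  => /vec5_inj [e1 e2 e3 e4 e5].
  have hc : c = 0 by lra. subst c.
  have ha : a = -b by lra. subst a.
  have hb : b = 0 by apply: (@prod0p R b (dBu * thu)); [nra|lra]. subst b.
  by split; lra.
- have HH : forall x, (P x /\ thl * dBu * vzp x + thl * dBl * vzm x + dBu * vth x - vdp x = (thl * dBu)) ->
    vpsi x = vzp x + vzm x /\ glin 0 (thl * dBu) (thl * dBl) dBu (-1) x = (thl * dBu).
    by move=> x [Px gx]; split; [exact: P_hyp _ Px | rewrite /glin; lra].
  exact: (@face_dp R (fun x => P x /\ thl * dBu * vzp x + thl * dBl * vzm x + dBu * vth x - vdp x = (thl * dBu)) 0 (thl * dBu) (thl * dBl) dBu (-1) (thl * dBu) m1nz HH).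
Qed.

Lemma fac8 : facet_le P (fun x => thl * dBl * vzp x + thl * dBu * vzm x + dBl * vth x - vdp x) (thl * dBl).
Proof.
hyps.
apply: (@mk_le _ 0 (thl * dBl) (thl * dBu) dBl (-1)).
- by move=> x; rewrite /glin; ring.
- move=> y Uy; rewrite /glin.
  case: Uy => [[-> [-> [-> [-> /andP[? ?]]]]]|[[-> [-> [-> [/andP[? ?] /andP[? ?]]]]]|[-> [-> [-> [/andP[? ?] /andP[? ?]]]]]]]; nra.
split.
- apply: (@aff3 _ _ A0 B0 B1 C1); try (split; [apply: conv1; memU | coords; ring]).
  move=> a b c.
  rewrite !vec5_opp !vec5_add !vec5_scale !vec5_add [X in _ = X -> _]vec5_0
  => /vec5_inj [e1 e2 e3 e4 e5].
  have hc : c = 0 by lra. subst c.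
  have ha : a = -b by lra. subst a.
  have hb : b = 0 by apply: (@prod0p R b ((- (dBl * thu)))); [nra|lra]. subst b.
  by split; lra.
- have HH : forall x, (P x /\ thl * dBl * vzp x + thl * dBu * vzm x + dBl * vth x - vdp x = (thl * dBl)) ->
    vpsi x = vzp x + vzm x /\ glin 0 (thl * dBl) (thl * dBu) dBl (-1) x = (thl * dBl).
    by move=> x [Px gx]; split; [exact: P_hyp _ Px | rewrite /glin; lra].
  exact: (@face_dp R (fun x => P x /\ thl * dBl * vzp x + thl * dBu * vzm x + dBl * vth x - vdp x = (thl * dBl)) 0 (thl * dBl) (thl * dBu) dBl (-1) (thl * dBl) m1nz HH).
Qed.
End Main.

Theorem theorem1 (R : realFieldType) (thl thu dBl dBu : R)
  (hthl : thl < 0) (hthu : 0 < thu) (hdBl : dBl < 0) (hdBu : 0 < dBu) :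
  let P := Pfacts thl thu dBl dBu in
    facet_ge P (fun x => thl * vzp x + vth x) thl /\
      facet_le P (fun x => thu * vzm x + vth x) thu /\
      facet_ge P (fun x => - (thu * dBl) * vzp x - thl * dBu * vzm x + vdp x) 0 /\
      facet_le P (fun x => - (thu * dBu) * vzp x - thl * dBl * vzm x + vdp x) 0 /\
      facet_le P (fun x => thu * dBl * vzp x + thu * dBu * vzm x + dBu * vth x - vdp x)
               (thu * dBu) /\
      facet_ge P (fun x => thu * dBu * vzp x + thu * dBl * vzm x + dBl * vth x - vdp x)
               (thu * dBl) /\
      facet_ge P (fun x => thl * dBu * vzp x + thl * dBl * vzm x + dBu * vth x - vdp x)
               (thl * dBu) /\
      facet_le P (fun x => thl * dBl * vzp x + thl * dBu * vzm x + dBl * vth x - vdp x)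
               (thl * dBl).
Proof.
move=> P.
split; first by apply: fac1.
split; first by apply: fac2.
split; first by apply: fac3.
split; first by apply: fac4.
split; first by apply: fac5.
split; first by apply: fac6.
split; first by apply: fac7.
by apply: fac8.
Qed.
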